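(* Let $\Phi_0$ be a strictly plurisubharmonic quadratic form on $\mathbf{C}^n$ and let $F$ be a holomorphic quadratic form on $\mathbf{C}^{2n}$ whose fundamental matrix $\mathcal{F}$ does not have the eigenvalues $\pm2$, and such that $\mathrm{Im}\, F|_{\Lambda_{\Phi_0}} \geq 0$. Let $\kappa_F$ be the complex linear canonical transformation $\kappa_F:(1+\frac12\mathcal{F})\rho\mapsto(1-\frac12\mathcal{F})\rho$, $\rho\in\mathbf{C}^{2n}$, and let $\Phi$ be the strictly plurisubharmonic quadratic form with $\kappa_F(\Lambda_{\Phi_0})=\Lambda_\Phi$. Then $$\Lambda_{\Phi} \cap \Lambda_{\Phi_0} = \left\{\left(1-\tfrac{1}{2} \mathcal{F}\right)\rho:\ \rho \in \Lambda_{\Phi_0},\ \mathrm{Im}\, F(\rho) = 0\right\}.$$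
   Context: The fundamental matrix of $F$ is $\mathcal{F}= \begin{pmatrix}F''_{\xi x} &F''_{\xi \xi }\\ -F''_{xx} &-F''_{x\xi }\end{pmatrix}$. For a real quadratic form $\Phi$ on $\mathbf{C}^n$, $\Lambda_{\Phi} = \{(x,\frac{2}{i}\frac{\partial \Phi}{\partial x}(x)) : x\in \mathbf{C}^n\}$. Under the stated hypotheses it is known that $\kappa_F(\Lambda_{\Phi_0})$ is of the form $\Lambda_\Phi$ for a strictly plurisubharmonic quadratic form $\Phi\le\Phi_0$. *)

(* Defs.v *)
From HB Require Import structures.
From mathcomp Require Import all_boot all_algebra.
From mathcomp Require Import reals.
From mathcomp.real_closed Require Import complex.

Set Implicit Arguments.
Unset Strict Implicit.
Unset Printing Implicit Defensive.

Import GRing.Theory Num.Theory.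
Local Open Scope ring_scope.

Section Defs.
Variables (R : realType) (n : nat).
Local Notation C := R[i].
Local Notation Cn := 'cV[C]_n.

Definition polar (Phi : Cn -> R) (x y : Cn) : R := Phi (x + y) - Phi x - Phi y.

Definition real_quadratic_form (Phi : Cn -> R) : Prop :=
  [/\ forall (t : R) (x : Cn), Phi (t%:C%C *: x) = t ^+ 2 * Phi x,
      forall x y z : Cn, polar Phi (x + y) z = polar Phi x z + polar Phi y z
    & forall (t : R) (x y : Cn), polar Phi (t%:C%C *: x) y = t * polar Phi x y].

Definition evec (k : 'I_n) : Cn := delta_mx k 0.

(* real directional derivative of a real-valued function at x in direction v;
   the symmetric difference quotient with step 1, which is EXACTLY the
   derivative for (real) quadratic forms and real-linear maps *)
Definition dirder (Phi : Cn -> R) (x v : Cn) : R :=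
  (Phi (x + v) - Phi (x - v)) / 2.

Definition dirderC (g : Cn -> C) (x v : Cn) : C := (g (x + v) - g (x - v)) / 2.

(* Wirtinger derivative  d Phi / d x_k  = 1/2 (d/da_k - i d/db_k),  x_k = a_k + i b_k *)
Definition dz (Phi : Cn -> R) (x : Cn) (k : 'I_n) : C :=
  ((dirder Phi x (evec k))%:C%C - 'i%C * (dirder Phi x ('i%C *: evec k))%:C%C) / 2.

Definition dzbar (g : Cn -> C) (x : Cn) (k : 'I_n) : C :=
  (dirderC g x (evec k) + 'i%C * dirderC g x ('i%C *: evec k)) / 2.

(* Levi matrix  d^2 Phi / (d x_j d xbar_k)  (constant for quadratic Phi) *)
Definition levi (Phi : Cn -> R) (j k : 'I_n) : C :=
  dzbar (fun x => dz Phi x j) 0 k.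

Definition strictly_psh_qf (Phi : Cn -> R) : Prop :=
  real_quadratic_form Phi /\
  forall v : Cn, v != 0 ->
    0 < \sum_(j < n) \sum_(k < n) levi Phi j k * v j 0 * conjc (v k 0).

Definition Lambda (Phi : Cn -> R) (rho : 'cV[C]_(n + n)) : Prop :=
  exists x : Cn, rho = col_mx x (\col_k (2 / 'i%C * dz Phi x k)).

(* holomorphic quadratic form on C^{2n} with (symmetric) Hessian M:
   F(rho) = 1/2 rho^T M rho *)
Definition holF (M : 'M[C]_(n + n)) (rho : 'cV[C]_(n + n)) : C :=
  2^-1 * (rho^T *m M *m rho) 0 0.

(* fundamental matrix  ( F''_{xi x}  F''_{xi xi} ; -F''_{xx}  -F''_{x xi} ),
   with rho = (x, xi), x the first n coordinates *)
Definition fundmx (M : 'M[C]_(n + n)) : 'M[C]_(n + n) :=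
  block_mx (dlsubmx M) (drsubmx M) (- ulsubmx M) (- ursubmx M).

Definition kappa (M : 'M[C]_(n + n)) (rho : 'cV[C]_(n + n)) : 'cV[C]_(n + n) :=
  ((1%:M - 2^-1 *: fundmx M) *m invmx (1%:M + 2^-1 *: fundmx M)) *m rho.

End Defs.

(* Main.v *)
Require Import Defs.
From HB Require Import structures.
From mathcomp Require Import all_boot all_algebra.
From mathcomp Require Import reals.
From mathcomp.real_closed Require Import complex.
From mathcomp Require Import all_order ring lra.
Import Order.TTheory GRing.Theory Num.Theory.
Local Open Scope ring_scope.
Set Implicit Arguments. Unset Strict Implicit.

Lemma rcN (R : realType) (t : R) : ((-t)%:C)%C = - (t%:C)%C :> R[i].
Proof. by rewrite rmorphN. Qed.

Lemma qf0 (R : realType) n (Phi : 'cV[R[i]]_n -> R) :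
  real_quadratic_form Phi -> Phi 0 = 0.
Proof. by case=> h _ _; have := h 0 0; rewrite scaler0 expr0n /= mul0r. Qed.

Lemma qfN (R : realType) n (Phi : 'cV[R[i]]_n -> R) x :
  real_quadratic_form Phi -> Phi (- x) = Phi x.
Proof. by case=> h _ _; have := h (-1) x; rewrite rcN scaleN1r sqrrN expr1n mul1r. Qed.

Lemma polarC (R : realType) n (Phi : 'cV[R[i]]_n -> R) x y :
  polar Phi x y = polar Phi y x.
Proof. rewrite /polar [x + y]addrC; lra. Qed.

Lemma polarDr (R : realType) n (Phi : 'cV[R[i]]_n -> R) x y z :
  real_quadratic_form Phi -> polar Phi x (y + z) = polar Phi x y + polar Phi x z.
Proof. by case=> _ h _; rewrite !(polarC Phi x) h. Qed.

Lemma polarZr (R : realType) n (Phi : 'cV[R[i]]_n -> R) t x y :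
  real_quadratic_form Phi -> polar Phi x (t%:C%C *: y) = t * polar Phi x y.
Proof. by case=> _ _ h; rewrite !(polarC Phi x) h. Qed.

Lemma polarZl (R : realType) n (Phi : 'cV[R[i]]_n -> R) t x y :
  real_quadratic_form Phi -> polar Phi (t%:C%C *: x) y = t * polar Phi x y.
Proof. by case=> _ _ h; rewrite h. Qed.

Lemma polarDl (R : realType) n (Phi : 'cV[R[i]]_n -> R) x y z :
  real_quadratic_form Phi -> polar Phi (x + y) z = polar Phi x z + polar Phi y z.
Proof. by case=> _ h _; rewrite h. Qed.

Lemma polarNr (R : realType) n (Phi : 'cV[R[i]]_n -> R) x y :
  real_quadratic_form Phi -> polar Phi x (- y) = - polar Phi x y.
Proof. by move=> q; rewrite -scaleN1r -rcN polarZr // mulN1r. Qed.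

Lemma polar0r (R : realType) n (Phi : 'cV[R[i]]_n -> R) x :
  real_quadratic_form Phi -> polar Phi x 0 = 0.
Proof. by move=> q; rewrite /polar addr0 qf0 // subrr subr0. Qed.

Lemma polar_sumr (R : realType) n (Phi : 'cV[R[i]]_n -> R) x (f : 'I_n -> 'cV[R[i]]_n) :
  real_quadratic_form Phi -> polar Phi x (\sum_k f k) = \sum_k polar Phi x (f k).
Proof.
move=> q; apply: (big_morph (polar Phi x)); first by move=> ??; rewrite polarDr.
exact: polar0r.
Qed.

Lemma dirderE (R : realType) n (Phi : 'cV[R[i]]_n -> R) x v :
  real_quadratic_form Phi -> dirder Phi x v = polar Phi x v.
Proof.
move=> q; rewrite /dirder.
have h1 : Phi (x + v) = Phi x + Phi v + polar Phi x v by rewrite /polar; lra.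
have h2 : Phi (x - v) = Phi x + Phi v - polar Phi x v.
  by rewrite -[Phi v](qfN v q) -polarNr // /polar; lra.
by rewrite h1 h2; field.
Qed.
Notation ImC := complex.Im.
Notation ReC := complex.Re.
Lemma ImD (R : realType) (x y : R[i]) : ImC (x + y) = ImC x + ImC y.
Proof. by case: x => a b; case: y => c d. Qed.
Lemma ImRM (R : realType) (k : R) (x : R[i]) : ImC (k%:C%C * x) = k * ImC x.
Proof. case: x => a b /=. by rewrite mul0r addr0. Qed.
Lemma ImiM (R : realType) (x : R[i]) : ImC ('i%C * x) = ReC x.
Proof. case: x => a b /=. by rewrite mul0r mul1r add0r. Qed.
Lemma iinv (R : realType) : ('i%C : R[i])^-1 = - 'i%C.
Proof.
have h : ('i%C : R[i]) * (- 'i%C) = 1.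
  by rewrite mulrN -expr2 sqr_i opprK.
rewrite -[LHS]mulr1 -h mulrA mulVf ?mul1r //.
by apply/eqP => /(congr1 (@complex.Im R)) /=; apply/eqP; rewrite oner_eq0.
Qed.
Lemma xiE (R : realType) (a b : R) : 2 / 'i%C * ((a%:C%C - 'i%C * b%:C%C)/2) = ((-b) +i* (-a))%C.
Proof.
rewrite iinv.
have h2 : (2 : R[i]) != 0 by rewrite pnatr_eq0.
set w := (_ - _).
have -> : 2 * - 'i%C * (w / 2) = - 'i%C * w by field.
by rewrite /w /=; simpc.
Qed.
Lemma rc2 (R : realType) : (2^-1 : R[i]) = (2^-1 : R)%:C%C.
Proof. by rewrite fmorphV rmorph_nat. Qed.

Definition xi (R : realType) n (Phi : 'cV[R[i]]_n -> R) (x : 'cV[R[i]]_n) : 'cV[R[i]]_n :=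
  \col_k (2 / 'i%C * dz Phi x k).

Lemma xiEk (R : realType) n (Phi : 'cV[R[i]]_n -> R) x k :
  real_quadratic_form Phi ->
  xi Phi x k 0 = ((- polar Phi x ('i%C *: evec R k)) +i* (- polar Phi x (evec R k)))%C.
Proof. by move=> q; rewrite mxE /dz !dirderE // xiE. Qed.

Lemma xiD (R : realType) n (Phi : 'cV[R[i]]_n -> R) x y :
  real_quadratic_form Phi -> xi Phi (x + y) = xi Phi x + xi Phi y.
Proof.
move=> q; apply/matrixP => k j; rewrite ord1 [RHS]mxE !xiEk // !polarDl //.
by simpc.
Qed.

Lemma xiZ (R : realType) n (Phi : 'cV[R[i]]_n -> R) t x :
  real_quadratic_form Phi -> xi Phi (t%:C%C *: x) = t%:C%C *: xi Phi x.
Proof.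
move=> q; apply/matrixP => k j; rewrite ord1 [RHS]mxE !xiEk // !polarZl //.
by rewrite -complexr0; simpc.
Qed.

Lemma LambdaE (R : realType) n (Phi : 'cV[R[i]]_n -> R) rho :
  Lambda Phi rho <-> rho = col_mx (usubmx rho) (xi Phi (usubmx rho)).
Proof.
split; last by move=> h; exists (usubmx rho).
by case=> x ->; rewrite col_mxKu.
Qed.

Lemma Lambda_col (R : realType) n (Phi : 'cV[R[i]]_n -> R) x :
  Lambda Phi (col_mx x (xi Phi x)).
Proof. by exists x. Qed.

Lemma LambdaD (R : realType) n (Phi : 'cV[R[i]]_n -> R) r1 r2 :
  real_quadratic_form Phi -> Lambda Phi r1 -> Lambda Phi r2 -> Lambda Phi (r1 + r2).
Proof.
move=> q [x1 ->] [x2 ->]; rewrite add_col_mx; exists (x1 + x2).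
by rewrite -/(xi Phi x1) -/(xi Phi x2) -/(xi Phi (x1 + x2)) xiD.
Qed.

Lemma LambdaZ (R : realType) n (Phi : 'cV[R[i]]_n -> R) t r :
  real_quadratic_form Phi -> Lambda Phi r -> Lambda Phi (t%:C%C *: r).
Proof.
move=> q [x ->]; rewrite scale_col_mx; exists (t%:C%C *: x).
by rewrite -/(xi Phi x) -/(xi Phi (t%:C%C *: x)) xiZ.
Qed.

Lemma LambdaN (R : realType) n (Phi : 'cV[R[i]]_n -> R) r :
  real_quadratic_form Phi -> Lambda Phi r -> Lambda Phi (- r).
Proof. by move=> q h; rewrite -scaleN1r -rcN; apply: LambdaZ. Qed.

Lemma LambdaB (R : realType) n (Phi : 'cV[R[i]]_n -> R) r1 r2 :
  real_quadratic_form Phi -> Lambda Phi r1 -> Lambda Phi r2 -> Lambda Phi (r1 - r2).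
Proof. by move=> q h1 h2; apply: LambdaD => //; apply: LambdaN. Qed.

Definition bil (R : realType) n (u v : 'cV[R[i]]_n) : R[i] := (u^T *m v) 0 0.

Lemma bilE (R : realType) n (u v : 'cV[R[i]]_n) : bil u v = \sum_k u k 0 * v k 0.
Proof. by rewrite /bil mxE; apply: eq_bigr => k _; rewrite mxE. Qed.

Lemma bilC (R : realType) n (u v : 'cV[R[i]]_n) : bil u v = bil v u.
Proof. by rewrite !bilE; apply: eq_bigr => k _; rewrite mulrC. Qed.

Lemma bilBr (R : realType) n (u v w : 'cV[R[i]]_n) : bil u (v - w) = bil u v - bil u w.
Proof. by rewrite /bil mulmxBr !mxE. Qed.

Lemma bil_evec (R : realType) n k (w : 'cV[R[i]]_n) : bil (evec R k) w = w k 0.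
Proof.
rewrite bilE (bigD1 k) //= big1 ?addr0; first by rewrite mxE !eqxx mul1r.
by move=> j /negbTE hj; rewrite mxE hj mul0r.
Qed.

Lemma bil_ievec (R : realType) n k (w : 'cV[R[i]]_n) :
  bil ('i%C *: evec R k) w = 'i%C * w k 0.
Proof.
rewrite bilE (bigD1 k) //= big1 ?addr0; first by rewrite !mxE !eqxx mulr1.
by move=> j /negbTE hj; rewrite !mxE hj mulr0 mul0r.
Qed.

Lemma ImC0 (R : realType) : ImC (0 : R[i]) = 0. Proof. by []. Qed.

Lemma ImC_sum (R : realType) n (f : 'I_n -> R[i]) : ImC (\sum_k f k) = \sum_k ImC (f k).
Proof. exact: (big_morph _ (@ImD R) (ImC0 R)). Qed.

Lemma col_decomp (R : realType) n (y : 'cV[R[i]]_n) : y = \sum_k y k 0 *: evec R k.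
Proof.
rewrite {1}[y]matrix_sum_delta; apply: eq_bigr => k _.
by rewrite big_ord1.
Qed.

Lemma Im_bil_xi (R : realType) n (Phi : 'cV[R[i]]_n -> R) x y :
  real_quadratic_form Phi -> ImC (bil (xi Phi x) y) = - polar Phi x y.
Proof.
move=> q; rewrite bilE ImC_sum {2}[y]col_decomp polar_sumr // -sumrN.
apply: eq_bigr => k _; rewrite xiEk //.
case: (y k 0) => c d.
have -> : ((c +i* d)%C *: evec R k) = c%:C%C *: evec R k + d%:C%C *: ('i%C *: evec R k).
  rewrite scalerA -scalerDl; congr (_ *: _).
  by rewrite -!complexr0; simpc.
rewrite (polarDr x _ _ q) !polarZr //; simpc => /=; lra.
Qed.

Lemma sigma_col (R : realType) n (M : 'M[R[i]]_(n + n)) (x xx y yy : 'cV[R[i]]_n) :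
  (col_mx x xx)^T *m M *m col_mx y yy =
  xx^T *m (dlsubmx M *m y + drsubmx M *m yy) - x^T *m (- ulsubmx M *m y + - ursubmx M *m yy).
Proof.
rewrite -{1}[M]submxK tr_col_mx mul_row_block mul_row_col !mulmxDl !mulmxDr !mulNmx !mulmxN !mulmxA opprD !opprK.
by rewrite addrACA addrC.
Qed.

Lemma mxB00 (R : realType) (A B : 'M[R[i]]_1) : (A - B) 0 0 = A 0 0 - B 0 0.
Proof. by rewrite !mxE. Qed.

Lemma fundmx_mul (R : realType) n (M : 'M[R[i]]_(n + n)) (tau : 'cV[R[i]]_(n + n)) :
  fundmx M *m tau = col_mx (dlsubmx M *m usubmx tau + drsubmx M *m dsubmx tau)
                           (- ulsubmx M *m usubmx tau + - ursubmx M *m dsubmx tau).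
Proof. by rewrite -{1}(vsubmxK tau) /fundmx mul_block_col. Qed.

Lemma sigmaE (R : realType) n (M : 'M[R[i]]_(n + n)) (rho tau : 'cV[R[i]]_(n + n)) :
  (rho^T *m M *m tau) 0 0 =
  bil (dsubmx rho) (usubmx (fundmx M *m tau)) - bil (usubmx rho) (dsubmx (fundmx M *m tau)).
Proof.
rewrite fundmx_mul col_mxKu col_mxKd -{1}(vsubmxK rho) -{1}(vsubmxK tau) sigma_col.
by rewrite mxB00.
Qed.

Lemma ImN (R : realType) (x : R[i]) : ImC (- x) = - ImC x.
Proof. by case: x. Qed.

Lemma ImB (R : realType) (x y : R[i]) : ImC (x - y) = ImC x - ImC y.
Proof. by rewrite ImD ImN. Qed.

Lemma Lambda_d (R : realType) n (Phi : 'cV[R[i]]_n -> R) rho :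
  Lambda Phi rho -> dsubmx rho = xi Phi (usubmx rho).
Proof. by move=> /LambdaE h; rewrite {1}h col_mxKd. Qed.

Lemma iso_Im (R : realType) n (Phi : 'cV[R[i]]_n -> R) (M : 'M[R[i]]_(n + n)) rho tau :
  real_quadratic_form Phi -> Lambda Phi rho -> Lambda Phi (fundmx M *m tau) ->
  ImC ((rho^T *m M *m tau) 0 0) = 0.
Proof.
move=> q h1 h2; rewrite sigmaE (Lambda_d h1) (Lambda_d h2) ImB.
by rewrite [bil (usubmx rho) _]bilC !Im_bil_xi // polarC subrr.
Qed.

Lemma max_Lambda (R : realType) n (Phi : 'cV[R[i]]_n -> R) (M : 'M[R[i]]_(n + n)) rho :
  real_quadratic_form Phi ->
  (forall v, Lambda Phi v -> ImC ((v^T *m M *m rho) 0 0) = 0) ->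
  Lambda Phi (fundmx M *m rho).
Proof.
move=> q h; apply/LambdaE.
set y := usubmx (fundmx M *m rho); set eta := dsubmx (fundmx M *m rho).
suff e : eta = xi Phi y by rewrite -e vsubmxK.
apply/eqP; rewrite -subr_eq0; apply/eqP; set w := eta - xi Phi y.
have hz : forall z, ImC (bil z w) = 0.
  move=> z; have := h _ (Lambda_col Phi z).
  rewrite sigmaE col_mxKu col_mxKd -/y -/eta ImB Im_bil_xi // => e.
  rewrite bilBr ImB [bil z (xi Phi y)]bilC Im_bil_xi // polarC; lra.
apply/matrixP => k j; rewrite ord1 [RHS]mxE.
have h1 := hz (evec R k); have h2 := hz ('i%C *: evec R k).
rewrite bil_evec in h1; rewrite bil_ievec ImiM in h2.
move: h1 h2; case: (w k 0) => a b /= -> ->; done.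
Qed.

Lemma lin_quad_nonneg (R : realType) (a b : R) :
  (forall t : R, 0 <= t * a + t ^+ 2 * b) -> a = 0.
Proof.
move=> h; apply/eqP; apply/negPn/negP => na.
set s := (`|b| + 1)^-1.
have hb1 : 0 < `|b| + 1 by rewrite ltr_wpDl.
have sp : 0 < s by rewrite invr_gt0.
have ss : s * (`|b| + 1) = 1 by rewrite mulVf // gt_eqF.
have bb : b <= `|b| by rewrite ler_norm.
have a2 : 0 < a ^+ 2 by rewrite lt_def sqr_ge0 andbT sqrf_eq0.
have := h (- a * s).
have -> : (- a * s) * a + (- a * s) ^+ 2 * b = (a ^+ 2 * s) * (s * b - 1) by ring.
have f : s * b - 1 <= - s.
  have : s * b <= s * `|b| by rewrite ler_wpM2l // ltW.
  move: ss; rewrite mulrDr mulr1 => ss; lra.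
have pp : 0 < a ^+ 2 * s by rewrite mulr_gt0.
have := ler_wpM2l (ltW pp) f.
have : 0 < (a ^+ 2 * s) * s by rewrite mulr_gt0.
lra.
Qed.
Lemma unit_half (R : realType) (m : nat) (G : 'M[R[i]]_m) :
  ~~ eigenvalue G (-2) -> (1%:M + 2^-1 *: G) \in unitmx.
Proof.
move=> nev; rewrite -row_free_unit -kermx_eq0; apply: contraR nev => /rowV0Pn [v].
rewrite sub_kermx => /eqP hv nz; apply/eigenvalueP; exists v => //.
have h2 : (2 : R[i]) != 0 by rewrite pnatr_eq0.
move: hv; rewrite mulmxDr mulmx1 -scalemxAr => /eqP; rewrite addr_eq0 => /eqP hv.
have hv' : 2^-1 *: (v *m G) = - v by apply: oppr_inj; rewrite opprK -hv.
have -> : v *m G = 2 *: (2^-1 *: (v *m G)) by rewrite scalerA mulfV // scale1r.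
by rewrite hv' scalerN scaleNr.
Qed.

Lemma holF_expand (R : realType) n (M : 'M[R[i]]_(n + n)) (r v : 'cV[R[i]]_(n + n)) c :
  M^T = M ->
  holF M (r + c *: v) = holF M r + c * (v^T *m M *m r) 0 0 + c ^+ 2 * holF M v.
Proof.
move=> MT.
have e : (r^T *m M *m v) 0 0 = (v^T *m M *m r) 0 0.
  have tr00 : forall A : 'M[R[i]]_1, A 0 0 = A^T 0 0 by move=> A; rewrite mxE.
  by rewrite tr00 trmx_mul trmx_mul trmxK MT mulmxA.
have et : (r + c *: v)^T = r^T + c *: v^T by rewrite linearD linearZ.
rewrite /holF et !mulmxDl !mulmxDr -!scalemxAl -!scalemxAr.
have D00 : forall A B : 'M[R[i]]_1, (A + B) 0 0 = A 0 0 + B 0 0 by move=> ??; rewrite !mxE.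
have Z00 : forall (A : 'M[R[i]]_1) a, (a *: A) 0 0 = a * A 0 0 by move=> ??; rewrite !mxE.
rewrite !D00 !Z00 e.
have h2 : (2 : R[i]) != 0 by rewrite pnatr_eq0.
by field.
Qed.

Lemma ImNum (R : realType) (z : R[i]) : Im z = (ImC z)%:C%C.
Proof. by rewrite complexIm. Qed.

Unset Implicit Arguments.
Set Strict Implicit.

Theorem proposition2p3 (R : realType) (n : nat)
  (Phi0 Phi : 'cV[R[i]]_n -> R) (M : 'M[R[i]]_(n + n)) :
  strictly_psh_qf Phi0 ->
  M^T = M ->
  ~~ eigenvalue (fundmx M) 2 ->
  ~~ eigenvalue (fundmx M) (-2) ->
  (forall rho, Lambda Phi0 rho -> 0 <= Im (holF M rho)) ->
  strictly_psh_qf Phi ->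
  (forall rho, Lambda Phi rho <-> exists rho0, Lambda Phi0 rho0 /\ rho = kappa M rho0) ->
  forall rho : 'cV[R[i]]_(n + n),
    (Lambda Phi rho /\ Lambda Phi0 rho) <->
    exists rho0, [/\ Lambda Phi0 rho0, Im (holF M rho0) = 0
                   & rho = (1%:M - 2^-1 *: fundmx M) *m rho0].
Proof.
move=> [q0 _] MT _ nevm2 hpos _ hkap rho.
have U := unit_half nevm2.
have h2 : (2 : R[i]) != 0 by rewrite pnatr_eq0.
have hh : (2^-1 : R[i]) + 2^-1 = 1 by field.
set F := fundmx M.
set A1 := 1%:M + 2^-1 *: F; set A2 := 1%:M - 2^-1 *: F.
have A1E : forall r : 'cV[R[i]]_(n + n), A1 *m r = r + 2^-1 *: (F *m r).
  by move=> r; rewrite /A1 mulmxDl mul1mx scalemxAl.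
have A2E : forall r : 'cV[R[i]]_(n + n), A2 *m r = r - 2^-1 *: (F *m r).
  by move=> r; rewrite /A2 mulmxBl mul1mx scalemxAl.
have LZ2 : forall r : 'cV[R[i]]_(n + n), Lambda Phi0 r -> Lambda Phi0 (2^-1 *: r).
  by move=> r hr; rewrite rc2; apply: LambdaZ.
have LA1 : forall r : 'cV[R[i]]_(n + n), Lambda Phi0 r -> Lambda Phi0 (F *m r) -> Lambda Phi0 (A1 *m r).
  by move=> r h1 h3; rewrite A1E; apply: LambdaD => //; apply: LZ2.
have LA2 : forall r : 'cV[R[i]]_(n + n), Lambda Phi0 r -> Lambda Phi0 (F *m r) -> Lambda Phi0 (A2 *m r).
  by move=> r h1 h3; rewrite A2E; apply: LambdaB => //; apply: LZ2.
have ImH : forall r : 'cV[R[i]]_(n + n), Lambda Phi0 r -> Lambda Phi0 (F *m r) -> ImC (holF M r) = 0.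
  by move=> r h1 h3; rewrite /holF rc2 ImRM (iso_Im q0 h1 h3) mulr0.
have kapE : forall r : 'cV[R[i]]_(n + n), kappa M r = A2 *m (invmx A1 *m r).
  by move=> r; rewrite /kappa mulmxA.
split.
- case=> hL hL0.
  have [r0 [hr0 er]] := (hkap rho).1 hL.
  set r := invmx A1 *m r0.
  have e1 : A1 *m r = r0 by rewrite /r mulKVmx.
  have e2 : rho = A2 *m r by rewrite er kapE.
  rewrite e2 in hL0.
  have hr : Lambda Phi0 r.
    have -> : r = 2^-1 *: (A1 *m r + A2 *m r).
      by rewrite A1E A2E addrACA subrr addr0 scalerDr -scalerDl hh scale1r.
    by apply: LZ2; apply: LambdaD => //; rewrite e1.
  have hF : Lambda Phi0 (F *m r).
    have -> : F *m r = A1 *m r - A2 *m r.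
      by rewrite A1E A2E opprB [_ - r]addrC addrACA subrr add0r -scalerDl hh scale1r.
    by apply: LambdaB => //; rewrite e1.
  exists r; split => //.
  by rewrite ImNum ImH.
- case=> r [hr him ->].
  have hF : Lambda Phi0 (F *m r).
    apply: max_Lambda => // v hv.
    apply: (@lin_quad_nonneg R _ (ImC (holF M v))) => t.
    have := hpos _ (LambdaD q0 hr (LambdaZ t q0 hv)).
    rewrite ImNum ler0c holF_expand // !ImD ImRM -rmorphXn ImRM.
    move: him; rewrite ImNum => /complexI ->.
    by rewrite add0r.
  split; last exact: LA2.
  apply/hkap; exists (A1 *m r); split; first exact: LA1.
  by rewrite kapE mulKmx.
Qed.
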